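(* Fix $p\in(0,1)$ and let $D_n$ be the degree of the source of a random series-parallel network of size $n$ generated by the Bernoulli model with parameter $p$. For every $r\ge 1$ and $n\ge1$, $$\mathbb{E}\big(D_n^{\underline r}\big)=r!\sum_{j=0}^{r-1}\binom{r-1}{j}(-1)^{r-1-j}\binom{n+p(j+1)-1}{n-1},$$ where $D_n^{\underline r}=D_n(D_n-1)\cdots(D_n-r+1)$; consequently $\mathbb{E}(D_n^{\underline r})\sim \dfrac{r!\,n^{rp}}{\Gamma(rp+1)}$ as $n\to\infty$. Moreover, the probability generating function satisfies $$\sum_{n\ge1}\sum_{m}\mathbb{P}\{D_n=m\}z^{n-1}v^m=\frac{v}{v(1-z)+(1-v)(1-z)^{1-p}}.$$
   Context: Bernoulli model of series-parallel networks with parameter $p\in(0,1)$, $q=1-p$: at step $1$ the network is a single edge labelled $1$ from the source to the sink. At step $n>1$ one of the $n-1$ existing edges is chosen uniformly at random, say edge $j=(x,y)$; with probability $p$ a new parallel edge $(x,y)$ labelled $n$ is added, and with probability $q$ edge $(x,y)$ is replaced by edges $(x,z)$ labelled $j$ and $(z,y)$ labelled $n$, with $z$ a new vertex. The network after step $n$ has size $n$. The degree of the source is its out-degree. Binomial coefficients with real upper argument: $\binom{a}{k}=a(a-1)\cdots(a-k+1)/k!$. *)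

(* Defs.v *)
From Stdlib Require Import Arith Factorial Reals Lra Lia List.
Import ListNotations.
Open Scope R_scope.

(* A series-parallel network: the list of its edges (tail, head); the edge
   labelled k is the (k-1)-th element of the list.  Vertex 0 is the source,
   vertex 1 is the sink; the new vertex created at step n is vertex n (n >= 2),
   so all vertex names are distinct. *)
Definition network := list (nat * nat).

Definition edge_at (G : network) (j : nat) : nat * nat := nth j G (0%nat, 1%nat).

Definition par_step (G : network) (j : nat) : network :=
  let (x, y) := edge_at G j in G ++ [(x, y)].

(* series step: edge j=(x,y) replaced by (x,z) (keeps label j) and (z,y) (new label) *)
Definition ser_step (G : network) (j z : nat) : network :=
  let (x, y) := edge_at G j in firstn j G ++ (x, z) :: skipn (S j) G ++ [(z, y)].

Definition fdist := list (R * network).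

(* Distribution of the network after step n (size n) in the Bernoulli model
   with parameter p.  Step n+1: each of the n existing edges is chosen with
   probability 1/n; parallel with probability p, series with probability 1-p;
   the new vertex is named n+1. *)
Fixpoint sp_dist (p : R) (n : nat) : fdist :=
  match n with
  | O => []  (* size 0 is not defined; irrelevant *)
  | S O => [(1, [(0%nat, 1%nat)])]
  | S m =>
      flat_map (fun wG : R * network =>
        let (w, G) := wG in
        flat_map (fun j =>
          [(w * p / INR m, par_step G j);
           (w * (1 - p) / INR m, ser_step G j (S m))]) (seq 0 m))
        (sp_dist p m)
  end.

Definition src_deg (G : network) : nat :=
  length (filter (fun e => Nat.eqb (fst e) 0%nat) G).

Definition expect (p : R) (n : nat) (f : nat -> R) : R :=
  fold_right (fun wG acc => fst wG * f (src_deg (snd wG)) + acc) 0 (sp_dist p n).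

Definition prob_deg (p : R) (n m : nat) : R :=
  expect p n (fun d => if Nat.eqb d m then 1 else 0).

Fixpoint falling (x : R) (r : nat) : R :=
  match r with
  | O => 1
  | S k => falling x k * (x - INR k)
  end.

Definition binomR (a : R) (k : nat) : R := falling a k / INR (fact k).

(* Gauss/Euler limit characterisation of the Gamma function, x > 0:
   Gamma(x) = lim_n n! n^x / (x (x+1) ... (x+n)).  (Stdlib has no Gamma.) *)
Definition is_Gamma (x g : R) : Prop :=
  Un_cv (fun n => INR (fact n) * Rpower (INR n) x / falling (x + INR n) (S n)) g.

(* Main.v *)
Require Import Defs.
From Stdlib Require Import Arith Factorial Reals Lra Lia List.
From Coquelicot Require Coquelicot.
Import ListNotations.
Open Scope R_scope.

Definition EE (L : fdist) (f : nat -> R) : R :=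
  fold_right (fun wG acc => fst wG * f (src_deg (snd wG)) + acc) 0 L.

Lemma EE_app L1 L2 f : EE (L1 ++ L2) f = EE L1 f + EE L2 f.
Proof. induction L1; simpl; [lra| rewrite IHL1; lra]. Qed.

Lemma EE_flat_map {A : Type} (g : A -> fdist) l f :
  EE (flat_map g l) f = fold_right (fun a acc => EE (g a) f + acc) 0 l.
Proof. induction l; simpl; auto. rewrite EE_app, IHl; auto. Qed.

Lemma EE_ext L f g : (forall d, f d = g d) -> EE L f = EE L g.
Proof. intros H; induction L; simpl; auto. rewrite H, IHL; auto. Qed.

Lemma EE_lin L a b f g : EE L (fun d => a * f d + b * g d) = a * EE L f + b * EE L g.
Proof. induction L; simpl; [ring|]. rewrite IHL; ring. Qed.

Lemma src_deg_app G1 G2 : src_deg (G1 ++ G2) = (src_deg G1 + src_deg G2)%nat.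
Proof. unfold src_deg; rewrite filter_app, length_app; auto. Qed.

Lemma src_deg_cons e G : src_deg (e :: G) = ((if Nat.eqb (fst e) 0 then 1 else 0) + src_deg G)%nat.
Proof. unfold src_deg; simpl; destruct (Nat.eqb (fst e) 0); simpl; auto. Qed.

Definition e0 (G : network) j : nat := if Nat.eqb (fst (edge_at G j)) 0 then 1%nat else 0%nat.

Lemma deg_par G j : src_deg (par_step G j) = (src_deg G + e0 G j)%nat.
Proof.
  unfold par_step, e0. destruct (edge_at G j) as [x y]. rewrite src_deg_app, src_deg_cons.
  simpl. unfold src_deg at 2; simpl. lia.
Qed.

Lemma split_nth (G : network) j d : (j < length G)%nat -> firstn j G ++ nth j G d :: skipn (S j) G = G.
Proof. revert G; induction j; intros [|a G] H; simpl in *; try lia; auto. f_equal; apply IHj; lia. Qed.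

Lemma deg_ser G j z : (j < length G)%nat -> z <> 0%nat -> src_deg (ser_step G j z) = src_deg G.
Proof.
  intros H Hz. unfold ser_step, edge_at. pose proof (split_nth G j (0%nat,1%nat) H) as Hs.
  destruct (nth j G (0%nat,1%nat)) as [x y] eqn:Ex.
  assert (src_deg G = src_deg (firstn j G ++ (x,y) :: skipn (S j) G)) as -> by (rewrite Hs; auto).
  rewrite !src_deg_app, !src_deg_cons, src_deg_app, src_deg_cons. simpl.
  destruct (Nat.eqb z 0) eqn:Ez; [apply Nat.eqb_eq in Ez; lia|]. unfold src_deg at 3; simpl. lia.
Qed.

Lemma len_ser G j z : (j < length G)%nat -> length (ser_step G j z) = S (length G).
Proof.
  intros H. unfold ser_step. destruct (edge_at G j). rewrite length_app. cbn [length].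
  rewrite length_app, length_firstn, length_skipn. cbn [length]. lia.
Qed.

Lemma len_par G j : length (par_step G j) = S (length G).
Proof. unfold par_step. destruct (edge_at G j). rewrite length_app. simpl. lia. Qed.

Definition lsum (l : list R) := fold_right Rplus 0 l.

Lemma sum_e0 G : lsum (map (fun j => INR (e0 G j)) (seq 0 (length G))) = INR (src_deg G).
Proof.
  induction G as [|a G IH]; simpl; auto.
  rewrite <- seq_shift, map_map. 
  replace (map (fun x => INR (e0 (a :: G) (S x))) (seq 0 (length G)))
    with (map (fun j => INR (e0 G j)) (seq 0 (length G))) by reflexivity.
  rewrite IH, src_deg_cons, plus_INR. unfold e0, edge_at. simpl.
  destruct (Nat.eqb (fst a) 0); simpl; ring.
Qed.

Lemma lsum_affine (g : nat -> R) A B l :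
  lsum (map (fun j => A + B * g j) l) = INR (length l) * A + B * lsum (map g l).
Proof. unfold lsum in *. induction l; cbn [map fold_right length]; [simpl; ring|]. rewrite IHl, S_INR. ring. Qed.

Lemma inner_EE p m w G f : length G = m -> (1 <= m)%nat ->
  EE (flat_map (fun j => [(w * p / INR m, par_step G j); (w * (1 - p) / INR m, ser_step G j (S m))]) (seq 0 m)) f
  = w * (f (src_deg G) + p * INR (src_deg G) / INR m * (f (S (src_deg G)) - f (src_deg G))).
Proof.
  intros HL Hm. rewrite EE_flat_map.
  set (d := src_deg G).
  assert (Hgen : forall l, (forall j, In j l -> (j < m)%nat) ->
    fold_right (fun a acc => EE [(w * p / INR m, par_step G a); (w * (1 - p) / INR m, ser_step G a (S m))] f + acc) 0 l
    = lsum (map (fun j => w * f d / INR m + (w * p / INR m * (f (S d) - f d)) * INR (e0 G j)) l)).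
  { induction l as [|j l IH]; intros Hl; [reflexivity|]. cbn [fold_right map].
    rewrite IH by (intros; apply Hl; simpl; auto). unfold lsum, EE; cbn [fold_right map fst snd].
    rewrite deg_par, deg_ser by (try lia; rewrite HL; apply Hl; simpl; auto).
    fold d. unfold e0. destruct (Nat.eqb _ 0); simpl.
    - rewrite Nat.add_1_r. f_equal. field. apply not_0_INR; lia.
    - rewrite Nat.add_0_r. f_equal. field. apply not_0_INR; lia. }
  rewrite Hgen.
  2:{ intros j Hj. apply in_seq in Hj. lia. }
  rewrite lsum_affine, length_seq, <- HL, sum_e0, HL. fold d. field. apply not_0_INR; lia.
Qed.

Lemma sp_dist_SS p m : sp_dist p (S (S m)) =
  flat_map (fun wG : R * network =>
        let (w, G) := wG in
        flat_map (fun j =>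
          [(w * p / INR (S m), par_step G j);
           (w * (1 - p) / INR (S m), ser_step G j (S (S m)))]) (seq 0 (S m)))
        (sp_dist p (S m)).
Proof. reflexivity. Qed.

Lemma sp_inv p n : 0 <= p <= 1 -> (1 <= n)%nat -> forall x, In x (sp_dist p n) -> length (snd x) = n /\ 0 <= fst x.
Proof.
  intros Hp Hn. induction n as [|n IH]; [lia|].
  destruct n as [|n].
  - simpl. intros x [<-|[]]. simpl. split; auto; lra.
  - rewrite sp_dist_SS. intros x Hx. apply in_flat_map in Hx as [[w G] [HwG Hx]].
    destruct (IH ltac:(lia) _ HwG) as [HL Hw]. simpl in HL, Hw.
    apply in_flat_map in Hx as [j [Hj Hx]]. apply in_seq in Hj.
    assert (0 < INR (S n)) by (apply lt_0_INR; lia).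
    destruct Hx as [<-|[<-|[]]]; cbn [fst snd]; split.
    + rewrite len_par; lia.
    + apply Rmult_le_pos; [apply Rmult_le_pos; lra| left; apply Rinv_0_lt_compat; lra].
    + rewrite len_ser; lia.
    + apply Rmult_le_pos; [apply Rmult_le_pos; lra| left; apply Rinv_0_lt_compat; lra].
Qed.

Lemma expect_step p m f : 0 <= p <= 1 -> (1 <= m)%nat ->
  expect p (S m) f = expect p m (fun d => f d + p * INR d / INR m * (f (S d) - f d)).
Proof.
  intros Hp Hm. destruct m as [|m]; [lia|]. unfold expect. fold (EE (sp_dist p (S (S m))) f).
  fold (EE (sp_dist p (S m)) (fun d => f d + p * INR d / INR (S m) * (f (S d) - f d))).
  rewrite sp_dist_SS, EE_flat_map.
  pose proof (sp_inv p (S m) Hp Hm) as Hinv. revert Hinv.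
  generalize (sp_dist p (S m)). intros L Hinv. induction L as [|[w G] L IH]; [reflexivity|].
  cbn [fold_right fst snd]. rewrite IH by (intros; apply Hinv; simpl; auto).
  destruct (Hinv (w, G) (or_introl eq_refl)) as [HL _]. simpl in HL.
  rewrite inner_EE; auto.
Qed.

Lemma expect_one p f : expect p 1 f = f 1%nat.
Proof. unfold expect; simpl. unfold src_deg; simpl. ring. Qed.

Lemma expect_ext p n f g : (forall d, f d = g d) -> expect p n f = expect p n g.
Proof. apply EE_ext. Qed.

Lemma expect_lin p n a b f g : expect p n (fun d => a * f d + b * g d) = a * expect p n f + b * expect p n g.
Proof. apply EE_lin. Qed.

Lemma expect_supp p n f g : 0 <= p <= 1 -> (1 <= n)%nat -> (forall d, (d <= n)%nat -> f d = g d) ->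
  expect p n f = expect p n g.
Proof.
  intros Hp Hn H. pose proof (sp_inv p n Hp Hn) as Hinv. unfold expect. revert Hinv.
  generalize (sp_dist p n). intros L Hinv. induction L as [|[w G] L IH]; simpl; auto.
  rewrite IH by (intros; apply Hinv; simpl; auto).
  destruct (Hinv (w, G) (or_introl eq_refl)) as [HL _]. simpl in HL.
  rewrite H; auto. rewrite <- HL. unfold src_deg. apply filter_length_le.
Qed.

Lemma expect_nonneg p n f : 0 <= p <= 1 -> (1 <= n)%nat -> (forall d, 0 <= f d) -> 0 <= expect p n f.
Proof.
  intros Hp Hn H. pose proof (sp_inv p n Hp Hn) as Hinv. unfold expect. revert Hinv.
  generalize (sp_dist p n). intros L Hinv. induction L as [|[w G] L IH]; simpl; [lra|].
  destruct (Hinv (w, G) (or_introl eq_refl)) as [_ Hw]. simpl in Hw.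
  assert (0 <= fold_right (fun wG acc => fst wG * f (src_deg (snd wG)) + acc) 0 L) by (apply IH; intros; apply Hinv; simpl; auto).
  specialize (H (src_deg G)). nra.
Qed.

Lemma falling_top x k : falling x (S k) = x * falling (x - 1) k.
Proof.
  induction k; simpl; [ring|]. simpl in IHk. rewrite IHk. destruct k; simpl; ring.
Qed.

Lemma falling_zero d r : (d < r)%nat -> falling (INR d) r = 0.
Proof.
  induction r; intros H; [lia|]. simpl. destruct (Nat.eq_dec d r) as [->|].
  - ring.
  - rewrite IHr by lia. ring.
Qed.

Lemma falling_diff x k : falling (x + 1) (S k) - falling x (S k) = INR (S k) * falling x k.
Proof.
  induction k.
  - simpl. ring.
  - change (falling (x+1) (S (S k))) with (falling (x+1) (S k) * (x + 1 - INR (S k))).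
    change (falling x (S (S k))) with (falling x (S k) * (x - INR (S k))).
    replace (falling (x + 1) (S k)) with (falling x (S k) + INR (S k) * falling x k) by lra.
    change (falling x (S k)) with (falling x k * (x - INR k)).
    rewrite !S_INR. ring.
Qed.

Definition gb (a : R) (n : nat) : R := binomR (INR n + a - 1) (n - 1).

Lemma gb_one a : gb a 1 = 1.
Proof. unfold gb, binomR. simpl. field. Qed.

Lemma INR_fact_pos n : 0 < INR (fact n).
Proof. apply lt_0_INR, lt_O_fact. Qed.

Lemma gb_step a n : (1 <= n)%nat -> gb a (S n) = gb a n * (INR n + a) / INR n.
Proof.
  intros Hn. destruct n as [|n]; [lia|]. unfold gb, binomR.
  replace (S (S n) - 1)%nat with (S n) by lia. replace (S n - 1)%nat with n by lia.
  rewrite falling_top, fact_simpl, mult_INR.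
  replace (INR (S (S n)) + a - 1 - 1) with (INR (S n) + a - 1) by (rewrite (S_INR (S n)); ring).
  replace (INR (S (S n)) + a - 1) with (INR (S n) + a) by (rewrite (S_INR (S n)); ring).
  pose proof (INR_fact_pos n). assert (0 < INR (S n)) by (apply lt_0_INR; lia).
  field. lra.
Qed.

Lemma C_id u j : (j <= u)%nat -> C (S u) j * (INR (S u) - INR j) = INR (S u) * C u j.
Proof.
  intros H. unfold C. replace (S u - j)%nat with (S (u - j)) by lia.
  rewrite !fact_simpl, !mult_INR.
  replace (INR (S u) - INR j) with (INR (S (u - j))) by (rewrite !S_INR, minus_INR by lia; ring).
  pose proof (INR_fact_pos j). pose proof (INR_fact_pos (u - j)). pose proof (INR_fact_pos u).
  assert (0 < INR (S (u - j))) by (apply lt_0_INR; lia).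
  field. lra.
Qed.

Lemma sum_C_shift (beta : nat -> R) (sg : nat -> nat -> R) u :
  (forall j, (j <= u)%nat -> sg (S u) j = - sg u j) ->
  sum_f_R0 (fun j => C (S u) j * sg (S u) j * beta j * (INR j - INR (S u))) (S u)
  = INR (S u) * sum_f_R0 (fun j => C u j * sg u j * beta j) u.
Proof.
  intros Hs. rewrite tech5. replace (INR (S u) - INR (S u)) with 0 by ring. rewrite Rmult_0_r, Rplus_0_r.
  rewrite scal_sum. apply sum_eq. intros j Hj. rewrite Hs by auto.
  replace (C (S u) j * - sg u j * beta j * (INR j - INR (S u))) with
    ((C (S u) j * (INR (S u) - INR j)) * sg u j * beta j) by ring.
  rewrite C_id by auto. ring.
Qed.

Definition Mom p n r := expect p n (fun d => falling (INR d) r).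

Lemma Mom0 p n : 0 <= p <= 1 -> (1 <= n)%nat -> Mom p n 0 = 1.
Proof.
  intros Hp. induction n; intros Hn; [lia|]. destruct n.
  - unfold Mom. rewrite expect_one. reflexivity.
  - unfold Mom in *. rewrite expect_step by (auto; lia).
    transitivity (expect p (S n) (fun d => falling (INR d) 0)); [apply expect_ext; intros; simpl; ring | apply IHn; lia].
Qed.

Lemma Mom_step p m u : 0 <= p <= 1 -> (1 <= m)%nat ->
  Mom p (S m) (S u) = (1 + p * INR (S u) / INR m) * Mom p m (S u) + p * INR (S u) * INR u / INR m * Mom p m u.
Proof.
  intros Hp Hm. unfold Mom. rewrite expect_step by auto. rewrite <- expect_lin. apply expect_ext. intros d.
  rewrite (S_INR d), falling_diff.
  change (falling (INR d) (S u)) with (falling (INR d) u * (INR d - INR u)).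
  assert (INR m <> 0) by (apply not_0_INR; lia). field. auto.
Qed.

Definition Aform p n u := sum_f_R0 (fun j => C u j * (-1) ^ (u - j) * gb (p * INR (S j)) n) u.

Lemma sum_binom_zero u : sum_f_R0 (fun j => C u j * (-1) ^ (u - j)) u = if Nat.eqb u 0 then 1 else 0.
Proof.
  pose proof (binomial 1 (-1) u) as H. replace (1 + -1) with 0 in H by ring.
  rewrite (sum_eq _ (fun j => C u j * (-1) ^ (u - j))) in H by (intros; rewrite pow1; ring).
  rewrite <- H. destruct u; simpl; ring.
Qed.

Lemma Aform_one p u : Aform p 1 u = if Nat.eqb u 0 then 1 else 0.
Proof.
  unfold Aform. rewrite <- sum_binom_zero. apply sum_eq. intros. rewrite gb_one. ring.
Qed.

Lemma Aform_step p n u : (1 <= n)%nat ->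
  Aform p (S n) (S u) = (1 + p * INR (S (S u)) / INR n) * Aform p n (S u) + p * INR (S u) / INR n * Aform p n u.
Proof.
  intros Hn. assert (HnZ : INR n <> 0) by (apply not_0_INR; lia).
  unfold Aform.
  rewrite (sum_eq _ (fun j => C (S u) j * (-1) ^ (S u - j) * gb (p * INR (S j)) n
         + (C (S u) j * (-1) ^ (S u - j) * gb (p * INR (S j)) n * (INR j - INR (S u))) * (p / INR n)
         + (C (S u) j * (-1) ^ (S u - j) * gb (p * INR (S j)) n) * (p * INR (S (S u)) / INR n))).
  2:{ intros j Hj. rewrite gb_step by auto. rewrite !S_INR. field. auto. }
  rewrite !plus_sum. rewrite <- (scal_sum _ _ (p / INR n)), <- (scal_sum _ _ (p * INR (S (S u)) / INR n)).
  rewrite (sum_C_shift (fun j => gb (p * INR (S j)) n) (fun u j => (-1) ^ (u - j))).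
  2:{ intros j Hj. replace (S u - j)%nat with (S (u - j)) by lia. simpl. ring. }
  field. auto.
Qed.

Lemma Mom_closed p n u : 0 <= p <= 1 -> (1 <= n)%nat -> Mom p n (S u) = INR (fact (S u)) * Aform p n u.
Proof.
  intros Hp Hn. revert u. induction n as [|n IH]; [lia|]. intros u. destruct n as [|n].
  - rewrite Aform_one. unfold Mom. rewrite expect_one. destruct u.
    + simpl. ring.
    + rewrite falling_zero by lia. simpl. ring.
  - rewrite Mom_step by (auto; lia). destruct u as [|u].
    + rewrite !IH by lia. unfold Aform. simpl sum_f_R0. rewrite (gb_step _ (S n)) by lia.
      assert (INR (S n) <> 0) by (apply not_0_INR; lia). simpl. field. auto.
    + rewrite !IH by lia. rewrite (Aform_step p (S n)) by lia.
      rewrite (fact_simpl (S u)), !mult_INR.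
      assert (INR (S n) <> 0) by (apply not_0_INR; lia). field. auto.
Qed.

Theorem part1 p (hp : 0 < p < 1) : forall r n : nat, (1 <= r)%nat -> (1 <= n)%nat ->
     expect p n (fun d => falling (INR d) r) =
     INR (fact r) *
       sum_f_R0 (fun j => C (r - 1) j * (-1) ^ (r - 1 - j) *
                          binomR (INR n + p * INR (S j) - 1) (n - 1)) (r - 1).
Proof.
  intros r n Hr Hn. destruct r as [|u]; [lia|]. replace (S u - 1)%nat with u by lia.
  apply (Mom_closed p n u); auto. lra.
Qed.

Lemma sum_C_shift' (beta : nat -> R) (sg : nat -> nat -> R) u :
  (forall j, (j <= u)%nat -> sg (S u) j = sg u j) ->
  sum_f_R0 (fun j => C (S u) j * sg (S u) j * beta j * (INR (S u) - INR j)) (S u)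
  = INR (S u) * sum_f_R0 (fun j => C u j * sg u j * beta j) u.
Proof.
  intros Hs. rewrite tech5. replace (INR (S u) - INR (S u)) with 0 by ring. rewrite Rmult_0_r, Rplus_0_r.
  rewrite scal_sum. apply sum_eq. intros j Hj. rewrite Hs by auto.
  replace (C (S u) j * sg u j * beta j * (INR (S u) - INR j)) with
    ((C (S u) j * (INR (S u) - INR j)) * sg u j * beta j) by ring.
  rewrite C_id by auto. ring.
Qed.

Definition ind (b : bool) : R := if b then 1 else 0.

Lemma prob_step p n m : 0 <= p <= 1 -> (1 <= n)%nat ->
  prob_deg p (S n) (S m) = (1 - p * INR (S m) / INR n) * prob_deg p n (S m) + p * INR m / INR n * prob_deg p n m.
Proof.
  intros Hp Hn. unfold prob_deg. rewrite expect_step by auto. rewrite <- expect_lin. apply expect_ext. intros d.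
  assert (INR n <> 0) by (apply not_0_INR; lia).
  destruct (Nat.eqb_spec d (S m)) as [->|H1].
  - rewrite (proj2 (Nat.eqb_neq (S (S m)) (S m))) by lia.
    rewrite (proj2 (Nat.eqb_neq (S m) m)) by lia. field. auto.
  - destruct (Nat.eqb_spec d m) as [->|H2].
    + rewrite Nat.eqb_refl. field. auto.
    + rewrite (proj2 (Nat.eqb_neq (S d) (S m))) by lia. field. auto.
Qed.

Lemma prob_zero p n : 0 <= p <= 1 -> (1 <= n)%nat -> prob_deg p n 0 = 0.
Proof.
  intros Hp. induction n; intros Hn; [lia|]. destruct n.
  - unfold prob_deg. rewrite expect_one. reflexivity.
  - unfold prob_deg in *. rewrite expect_step by (auto; lia).
    transitivity (expect p (S n) (fun d => if Nat.eqb d 0 then 1 else 0)); [|apply IHn; lia].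
    apply expect_ext. intros d. destruct d; simpl; unfold Rdiv; ring.
Qed.

Lemma prob_nonneg p n m : 0 <= p <= 1 -> (1 <= n)%nat -> 0 <= prob_deg p n m.
Proof. intros. apply expect_nonneg; auto. intros d. destruct (Nat.eqb d m); lra. Qed.

Lemma prob_big p n m : 0 <= p <= 1 -> (1 <= n)%nat -> (n < m)%nat -> prob_deg p n m = 0.
Proof.
  intros Hp Hn Hm. unfold prob_deg. rewrite (expect_supp p n _ (fun _ => 0)); auto.
  - unfold expect. generalize (sp_dist p n). induction f; simpl; auto. rewrite IHf. ring.
  - intros d Hd. rewrite (proj2 (Nat.eqb_neq d m)) by lia. auto.
Qed.

Definition Bform p n m := sum_f_R0 (fun i => C m i * (-1) ^ i * gb (- (p * INR (S i))) n) m.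

Lemma Bform_one p m : Bform p 1 m = if Nat.eqb m 0 then 1 else 0.
Proof.
  unfold Bform. pose proof (binomial (-1) 1 m) as H. replace (-1 + 1) with 0 in H by ring.
  rewrite (sum_eq _ (fun i => C m i * (-1) ^ i * gb (- (p * INR (S i))) 1)) in H
    by (intros; rewrite gb_one, pow1; ring).
  rewrite <- H. destruct m; simpl; ring.
Qed.

Lemma Bform_step p n m : (1 <= n)%nat ->
  Bform p (S n) (S m) = (1 - p * INR (S (S m)) / INR n) * Bform p n (S m) + p * INR (S m) / INR n * Bform p n m.
Proof.
  intros Hn. assert (HnZ : INR n <> 0) by (apply not_0_INR; lia).
  unfold Bform.
  rewrite (sum_eq _ (fun j => C (S m) j * (-1) ^ j * gb (- (p * INR (S j))) n
         + (C (S m) j * (-1) ^ j * gb (- (p * INR (S j))) n * (INR (S m) - INR j)) * (p / INR n)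
         + (C (S m) j * (-1) ^ j * gb (- (p * INR (S j))) n) * (- (p * INR (S (S m)) / INR n)))).
  2:{ intros j Hj. rewrite gb_step by auto. rewrite !S_INR. field. auto. }
  rewrite !plus_sum. rewrite <- (scal_sum _ _ (p / INR n)), <- (scal_sum _ _ (- (p * INR (S (S m)) / INR n))).
  rewrite (sum_C_shift' (fun j => gb (- (p * INR (S j))) n) (fun u j => (-1) ^ j)) by auto.
  field. auto.
Qed.

Lemma prob_closed p n m : 0 <= p <= 1 -> (1 <= n)%nat -> prob_deg p n (S m) = Bform p n m.
Proof.
  intros Hp Hn. revert m. induction n as [|n IH]; [lia|]. intros m. destruct n as [|n].
  - rewrite Bform_one. unfold prob_deg. rewrite expect_one. destruct m; simpl; auto.
  - rewrite prob_step by (auto; lia). destruct m as [|m].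
    + rewrite IH by lia. unfold Bform. simpl sum_f_R0. rewrite (gb_step _ (S n)) by lia.
      assert (INR (S n) <> 0) by (apply not_0_INR; lia). simpl. field. auto.
    + rewrite !IH by lia. rewrite (Bform_step p (S n)) by lia. reflexivity.
Qed.

Lemma sum_mono (f : nat -> R) M N : (forall i, 0 <= f i) -> (M <= N)%nat -> sum_f_R0 f M <= sum_f_R0 f N.
Proof.
  intros H HMN. induction HMN; [lra|]. rewrite tech5. specialize (H (S m)). lra.
Qed.

Lemma psum_le (a : nat -> R) l N : (forall k, 0 <= a k) -> infinite_sum a l -> sum_f_R0 a N <= l.
Proof.
  intros Ha Hl. apply (growing_ineq (sum_f_R0 a)).
  - intros n. simpl. specialize (Ha (S n)). lra.
  - exact Hl.
Qed.

Lemma lim_nonneg (a : nat -> R) l : (forall k, 0 <= a k) -> infinite_sum a l -> 0 <= l.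
Proof. intros Ha Hl. eapply Rle_trans, (psum_le a l 0 Ha Hl). simpl. apply Ha. Qed.

Lemma cv_finsum (u : nat -> nat -> R) (l : nat -> R) M :
  (forall m, Un_cv (u m) (l m)) -> Un_cv (fun N => sum_f_R0 (fun m => u m N) M) (sum_f_R0 l M).
Proof.
  intros H. induction M; simpl; auto. apply CV_plus; auto.
Qed.

Lemma sum_zero_ext (f : nat -> R) k N : (k <= N)%nat -> (forall m, (k < m)%nat -> f m = 0) ->
  sum_f_R0 f k = sum_f_R0 f N.
Proof.
  intros HkN H. induction HkN; auto. rewrite tech5, H by lia. lra.
Qed.

Lemma tri_swap (x : nat -> nat -> R) N : (forall m k, (k < m)%nat -> x m k = 0) ->
  sum_f_R0 (fun k => sum_f_R0 (fun m => x m k) k) N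
  = sum_f_R0 (fun m => sum_f_R0 (fun k => x m k) N) N.
Proof.
  intros Hz. induction N.
  - simpl. auto.
  - rewrite tech5, IHN. rewrite (tech5 (fun m => sum_f_R0 (fun k => x m k) (S N))).
    rewrite (sum_eq (fun m => sum_f_R0 (fun k => x m k) (S N))
                    (fun m => sum_f_R0 (fun k => x m k) N + x m (S N))) by (intros; apply tech5).
    rewrite plus_sum.
    assert (E : sum_f_R0 (fun k => x (S N) k) (S N) = x (S N) (S N)).
    { rewrite tech5. rewrite (sum_eq _ (fun _ => 0)) by (intros; apply Hz; lia).
      rewrite sum_cte. ring. }
    rewrite E, (tech5 (fun m => x m (S N))). ring.
Qed.

Lemma tonelli (x : nat -> nat -> R) (H : nat -> R) T :
  (forall m k, 0 <= x m k) -> (forall m k, (k < m)%nat -> x m k = 0) ->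
  (forall m, infinite_sum (x m) (H m)) -> infinite_sum H T ->
  infinite_sum (fun k => sum_f_R0 (fun m => x m k) k) T.
Proof.
  intros Hpos Hz Hm HT.
  assert (HH : forall m, 0 <= H m) by (intros m; apply (lim_nonneg (x m)); auto).
  intros eps Heps.
  destruct (HT (eps / 2) ltac:(lra)) as [M HM].
  specialize (HM M (Nat.le_refl M)). unfold Rdist in HM.
  assert (HSM : sum_f_R0 H M <= T) by (apply psum_le; auto).
  assert (Hcv := cv_finsum (fun m N => sum_f_R0 (x m) N) H M Hm).
  destruct (Hcv (eps / 2) ltac:(lra)) as [N0 HN0].
  exists (Nat.max N0 M). intros n Hn. unfold Rdist.
  rewrite tri_swap by auto.
  assert (Up : sum_f_R0 (fun m => sum_f_R0 (fun k => x m k) n) n <= T).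
  { eapply Rle_trans; [|apply (psum_le H T n HH HT)]. apply sum_Rle. intros m _. apply psum_le; auto. }
  assert (Lo : sum_f_R0 (fun m => sum_f_R0 (fun k => x m k) n) M <= sum_f_R0 (fun m => sum_f_R0 (fun k => x m k) n) n).
  { apply sum_mono; [|lia]. intros i. apply cond_pos_sum. auto. }
  specialize (HN0 n ltac:(lia)). unfold R_dist in HN0.
  apply Rabs_def2 in HM. 
  apply Rabs_def2 in HN0.
  change (sum_f_R0 (fun m => sum_f_R0 (fun k => x m k) n)) with (sum_f_R0 (fun m => sum_f_R0 (x m) n)) in *. apply Rabs_def1; lra.
Qed.

Module Analysis.
Import Coquelicot.Coquelicot.

Definition cb (s : R) (k : nat) : R := binomR (INR k + s - 1) k.

Lemma cb_0 s : cb s 0 = 1.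
Proof. unfold cb, binomR. simpl. field. Qed.

Lemma cb_succ s k : cb s (S k) = cb s k * (INR k + s) / INR (S k).
Proof.
  unfold cb, binomR. rewrite falling_top, fact_simpl, mult_INR.
  replace (INR (S k) + s - 1) with (INR k + s) by (rewrite S_INR; ring).
  pose proof (INR_fact_pos k). assert (0 < INR (S k)) by (apply lt_0_INR; lia).
  field. lra.
Qed.

Lemma cb_pos s k : 0 < s -> 0 < cb s k.
Proof.
  intros Hs. induction k. rewrite cb_0; lra. rewrite cb_succ.
  assert (0 < INR (S k)) by (apply lt_0_INR; lia). pose proof (pos_INR k).
  apply Rdiv_lt_0_compat; auto. apply Rmult_lt_0_compat; lra.
Qed.

Lemma cb_bound s k : Rabs (cb s k) <= cb (Rabs s + 1) k.
Proof.
  induction k. rewrite !cb_0, Rabs_R1; lra.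
  rewrite !cb_succ. assert (0 < INR (S k)) by (apply lt_0_INR; lia). pose proof (pos_INR k).
  unfold Rdiv. rewrite !Rabs_mult, (Rabs_inv (INR (S k))), (Rabs_right (INR (S k))) by lra.
  apply Rmult_le_compat_r. left; apply Rinv_0_lt_compat; lra.
  apply Rmult_le_compat; try apply Rabs_pos; auto.
  pose proof (Rabs_triang (INR k) s). rewrite (Rabs_right (INR k)) in H1 by lra. pose proof (Rabs_pos s). lra.
Qed.

Lemma CV_radius_le_abs a b : (forall n, Rabs (a n) <= Rabs (b n)) -> Rbar_le (CV_radius b) (CV_radius a).
Proof.
  intros H. destruct (CV_radius_bounded a) as [Hub_a Hlub_a]. destruct (CV_radius_bounded b) as [Hub_b Hlub_b].
  apply Hlub_b. intros r [M HM]. apply Hub_a. exists M. intros n. eapply Rle_trans, (HM n).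
  rewrite !Rabs_mult. apply Rmult_le_compat_r; [apply Rabs_pos|auto].
Qed.

Lemma cb_radius_pos s : 0 < s -> CV_radius (cb s) = 1.
Proof.
  intros Hs. replace (Finite 1) with (Finite (/ 1)) by (f_equal; field).
  apply CV_radius_finite_DAlembert; [intros n; apply Rgt_not_eq, cb_pos; auto| lra|].
  apply is_lim_seq_ext with (fun n => 1 + (s - 1) * / INR (S n)).
  { intros n. rewrite cb_succ. pose proof (cb_pos s n Hs). assert (0 < INR (S n)) by (apply lt_0_INR; lia).
    pose proof (pos_INR n).
    rewrite S_INR in *. rewrite Rabs_right. field. split; lra.
    apply Rle_ge. unfold Rdiv. apply Rmult_le_pos; [|left; apply Rinv_0_lt_compat; lra].
    unfold Rdiv. apply Rmult_le_pos; [|left; apply Rinv_0_lt_compat; lra]. nra. }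
  assert (Hl : is_lim_seq (fun n => / INR (S n)) 0).
  { replace (Finite 0) with (Rbar_inv p_infty) by reflexivity.
    apply is_lim_seq_inv; [|discriminate]. apply (is_lim_seq_incr_1 INR). apply is_lim_seq_INR. }
  pose proof (is_lim_seq_plus' _ _ 1 ((s-1)*0) (is_lim_seq_const 1)
     (is_lim_seq_mult' _ _ (s-1) 0 (is_lim_seq_const (s-1)) Hl)) as H2.
  replace (1 + (s-1)*0) with 1 in H2 by ring. exact H2.
Qed.

Lemma cb_radius s : Rbar_le 1 (CV_radius (cb s)).
Proof.
  rewrite <- (cb_radius_pos (Rabs s + 1)) by (pose proof (Rabs_pos s); lra).
  apply CV_radius_le_abs. intros n. rewrite (Rabs_right (cb (Rabs s + 1) n)).
  apply cb_bound. left. apply cb_pos. pose proof (Rabs_pos s); lra.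
Qed.

Lemma cb_inside s y : Rabs y < 1 -> Rbar_lt (Rabs y) (CV_radius (cb s)).
Proof. intros H. eapply Rbar_lt_le_trans, cb_radius. exact H. Qed.

Lemma cb_ode s y : Rabs y < 1 ->
  (1 - y) * PSeries (PS_derive (cb s)) y = s * PSeries (cb s) y.
Proof.
  intros Hy. pose proof (cb_inside s y Hy) as Hin.
  pose proof (PSeries_correct _ _ (ex_pseries_derive _ _ Hin)) as HD.
  set (D := PSeries (PS_derive (cb s)) y) in *.
  pose proof (is_pseries_minus _ _ _ _ _ HD (is_pseries_incr_1 _ _ _ HD)) as H1.
  pose proof (is_pseries_scal s _ _ _ (Rmult_comm _ _) (PSeries_correct _ _ (CV_radius_inside _ _ Hin))) as H2.
  apply is_pseries_unique in H2.
  assert (E1 : PSeries (PS_scal s (cb s)) y = plus D (opp (scal y D))).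
  2:{ rewrite H2 in E1. revert E1. unfold scal, plus, opp; simpl. unfold mult, plus, opp; simpl. intros E1. lra. }
  apply is_pseries_unique. eapply is_pseries_ext; [|exact H1].
  intros n. unfold PS_minus, PS_scal, PS_incr_1, PS_derive. destruct n.
  - rewrite cb_succ, cb_0. change (plus (INR 1 * (1 * (INR 0 + s) / INR 1)) (opp zero) = scal s 1).
    unfold plus, opp, zero, scal; simpl. unfold mult; simpl. unfold plus, opp, zero; simpl. field.
  - rewrite (cb_succ s (S n)). pose proof (pos_INR n).
    unfold plus, opp, scal; simpl. unfold mult; simpl. unfold plus, opp; simpl. field. change (INR (S n) + 1 <> 0). pose proof (pos_INR (S n)). lra.
Qed.

Lemma expln_derive s y : y < 1 ->
  is_derive (fun t => exp (s * ln (1 - t))) y (exp (s * ln (1 - y)) * (- s / (1 - y))).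
Proof.
  intros Hy. auto_derive. lra. replace (1 + - y) with (1 - y) by ring. field. lra.
Qed.

Lemma binser_val s z : 0 <= z < 1 -> PSeries (cb s) z = Rpower (1 - z) (- s).
Proof.
  intros Hz.
  set (h := fun t => PSeries (cb s) t * exp (s * ln (1 - t))).
  assert (Hd : forall t, -1 < t < 1 -> is_derive h t zero).
  { intros t Ht. assert (Hta : Rabs t < 1) by (apply Rabs_def1; lra).
    pose proof (is_derive_mult _ _ _ _ _ (is_derive_PSeries _ _ (cb_inside s t Hta)) (expln_derive s t ltac:(lra)) Rmult_comm) as H.
    assert (Heq := cb_ode s t Hta).
    set (D := PSeries (PS_derive (cb s)) t) in *. set (G := PSeries (cb s) t) in *.
    set (E := exp (s * ln (1 - t))) in *.
    assert (E0 : plus (mult D E) (mult G (E * (- s / (1 - t)))) = zero).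
    { unfold plus, mult, zero; simpl. unfold plus, mult, zero; simpl.
      replace (D * E + G * (E * (- s / (1 - t)))) with (E / (1 - t) * ((1 - t) * D - s * G)) by (field; lra).
      rewrite Heq. ring. }
    exact (eq_ind _ (fun l => is_derive h t l) H _ E0). }
  assert (Hc : h 0 = h z).
  { destruct (Req_dec z 0) as [->|Hz0]; auto.
    apply eq_is_derive; [|lra]. intros t Ht. apply Hd. lra. }
  unfold h in Hc. rewrite PSeries_0, cb_0, Rminus_0_r, ln_1, Rmult_0_r, exp_0, Rmult_1_l in Hc.
  unfold Rpower. apply (Rmult_eq_reg_r (exp (s * ln (1 - z)))); [|apply Rgt_not_eq, exp_pos].
  rewrite <- Hc. rewrite <- exp_plus. replace (- s * ln (1 - z) + s * ln (1 - z)) with 0 by ring. rewrite exp_0. ring.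
Qed.

Lemma binser s z : 0 <= z < 1 -> is_series (fun k => cb s k * z ^ k) (Rpower (1 - z) (- s)).
Proof.
  intros Hz. rewrite <- binser_val by auto.
  assert (Hta : Rabs z < 1) by (apply Rabs_def1; lra).
  pose proof (PSeries_correct _ _ (CV_radius_inside _ _ (cb_inside s z Hta))) as H.
  eapply is_series_ext; [|exact H]. intros n. simpl. rewrite pow_n_pow. unfold scal; simpl. unfold mult; simpl. ring.
Qed.

Lemma is_series_R_plus (a b : nat -> R) la lb : is_series a la -> is_series b lb ->
  is_series (fun n => a n + b n) (la + lb).
Proof. intros Ha Hb. exact (is_series_plus _ _ _ _ Ha Hb). Qed.

Lemma is_series_R_scal (c : R) (a : nat -> R) l : is_series a l -> is_series (fun n => c * a n) (c * l).
Proof. intros Ha. exact (is_series_scal c _ _ Ha). Qed.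

Lemma is_series_R_ext (a b : nat -> R) l : (forall n, a n = b n) -> is_series a l -> is_series b l.
Proof. apply is_series_ext. Qed.

Lemma is_series_finsum (F : nat -> nat -> R) (L : nat -> R) N :
  (forall i, is_series (F i) (L i)) -> is_series (fun k => sum_f_R0 (fun i => F i k) N) (sum_f_R0 L N).
Proof.
  intros H. induction N; simpl; auto. apply is_series_R_plus; auto.
Qed.

Lemma gb_cb a k : gb a (S k) = cb (a + 1) k.
Proof. unfold gb, cb. replace (S k - 1)%nat with k by lia. f_equal. rewrite S_INR; ring. Qed.

Lemma series_m p z m : 0 < p < 1 -> 0 <= z < 1 ->
  is_series (fun k => prob_deg p (S k) (S m) * z ^ k) (Rpower (1 - z) (p - 1) * (1 - Rpower (1 - z) p) ^ m).
Proof.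
  intros Hp Hz.
  apply is_series_ext with (fun k => sum_f_R0 (fun i => Binomial.C m i * (-1) ^ i * (cb (- (p * INR (S i)) + 1) k * z ^ k)) m).
  { intros k. rewrite prob_closed by (lra || lia). unfold Bform. rewrite Rmult_comm, scal_sum. apply sum_eq.
    intros i _. rewrite gb_cb. ring. }
  assert (Hw : 0 < 1 - z) by lra.
  set (W := Rpower (1 - z) p).
  replace (Rpower (1 - z) (p - 1) * (1 - W) ^ m) with
    (sum_f_R0 (fun i => Binomial.C m i * (-1) ^ i * Rpower (1 - z) (- (- (p * INR (S i)) + 1))) m).
  { apply is_series_finsum. intros i. apply is_series_R_scal. apply binser; auto. }
  replace (1 - W) with (- W + 1) by ring. rewrite binomial, scal_sum. apply sum_eq. intros i _.
  rewrite pow1. replace (- (- (p * INR (S i)) + 1)) with ((p - 1) + p * INR i) by (rewrite S_INR; ring).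
  rewrite Rpower_plus, <- Rpower_mult, Rpower_pow by (apply exp_pos).
  fold W. replace ((- W) ^ i) with ((-1) ^ i * W ^ i) by (rewrite <- Rpow_mult_distr; f_equal; ring).
  ring.
Qed.

Theorem part3 p (hp : 0 < p < 1) : forall z v : R, 0 <= z < 1 -> 0 <= v <= 1 ->
     infinite_sum
       (fun k => sum_f_R0 (fun m => prob_deg p (S k) m * v ^ m) (S k) * z ^ k)
       (v / (v * (1 - z) + (1 - v) * Rpower (1 - z) (1 - p))).
Proof.
  intros z v Hz Hv. assert (Hp01 : 0 <= p <= 1) by lra.
  set (x := fun m k => prob_deg p (S k) (S m) * v ^ (S m) * z ^ k).
  assert (Hw : 0 < 1 - z) by lra.
  set (W := Rpower (1 - z) p). set (Q := Rpower (1 - z) (1 - p)).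
  assert (HW : 0 < W) by apply exp_pos. assert (HQ : 0 < Q) by apply exp_pos.
  assert (HW1 : W <= 1).
  { unfold W, Rpower. apply Rle_trans with (exp 0); [|rewrite exp_0; lra].
    assert (ln (1 - z) <= 0) by (rewrite <- ln_1; apply ln_le; lra).
    assert (Ha : p * ln (1 - z) <= 0) by nra.
    destruct (Rle_lt_or_eq_dec _ _ Ha) as [Hlt|Heq]; [left; apply exp_increasing; auto | right; rewrite Heq; auto]. }
  assert (HWQ : W * Q = 1 - z).
  { unfold W, Q. rewrite <- Rpower_plus. replace (p + (1 - p)) with 1 by ring. apply Rpower_1; lra. }
  assert (HPm : Rpower (1 - z) (p - 1) = / Q).
  { unfold Q. rewrite <- Rpower_Ropp. f_equal. ring. }
  set (H := fun m => v ^ (S m) * (Rpower (1 - z) (p - 1) * (1 - W) ^ m)).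
  assert (Hterm : forall k, sum_f_R0 (fun m => prob_deg p (S k) m * v ^ m) (S k) * z ^ k
                          = sum_f_R0 (fun m => x m k) k).
  { intros k. rewrite decomp_sum by lia. simpl pred. rewrite prob_zero by (auto; lia).
    rewrite Rmult_0_l, Rplus_0_l, Rmult_comm, scal_sum. apply sum_eq. intros i _. unfold x. ring. }
  apply is_series_Reals. apply is_series_R_ext with (fun k => sum_f_R0 (fun m => x m k) k).
  { intros k. rewrite Hterm. reflexivity. }
  apply is_series_Reals. apply (tonelli x H).
  - intros m k. unfold x. apply Rmult_le_pos; [apply Rmult_le_pos|]; try apply pow_le; try lra.
    apply prob_nonneg; auto; lia.
  - intros m k Hkm. unfold x. rewrite prob_big by (auto; lia). ring.
  - intros m. apply is_series_Reals. unfold H.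
    apply is_series_R_ext with (fun k => v ^ S m * (prob_deg p (S k) (S m) * z ^ k)).
    { intros k. unfold x. ring. }
    apply is_series_R_scal. apply series_m; auto.
  - apply is_series_Reals. unfold H.
    apply is_series_R_ext with (fun m => (v * Rpower (1 - z) (p - 1)) * (v * (1 - W)) ^ m).
    { intros m. rewrite Rpow_mult_distr. simpl. ring. }
    replace (v / (v * (1 - z) + (1 - v) * Q)) with ((v * Rpower (1 - z) (p - 1)) * / (1 - v * (1 - W))).
    + apply is_series_R_scal. apply is_series_geom. rewrite Rabs_right; nra.
    + rewrite HPm, <- HWQ. assert (A1 : 0 < 1 - v * (1 - W)) by nra. field. replace (v * (W * Q) + (1 - v) * Q) with (Q * (1 - v * (1 - W))) by ring. split; [|split]; try apply Rgt_not_eq; try apply Rmult_lt_0_compat; lra.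
Qed.

Definition gseq x n := INR (fact n) * Rpower (INR n) x / falling (x + INR n) (S n).

Lemma falling_pos x n : 0 < x -> 0 < falling (x + INR n) (S n).
Proof.
  intros Hx. induction n.
  - simpl. lra.
  - rewrite falling_top. replace (x + INR (S n) - 1) with (x + INR n) by (rewrite S_INR; ring).
    apply Rmult_lt_0_compat; auto. pose proof (pos_INR (S n)); lra.
Qed.

Lemma gseq_step x n : 0 < x -> (1 <= n)%nat ->
  gseq x (S n) = gseq x n * (INR (S n) / (x + INR (S n))) * exp (x * (ln (INR (S n)) - ln (INR n))).
Proof.
  intros Hx Hn. unfold gseq. rewrite fact_simpl, mult_INR, (falling_top (x + INR (S n))).
  replace (x + INR (S n) - 1) with (x + INR n) by (rewrite S_INR; ring).
  unfold Rpower. replace (x * ln (INR (S n))) with (x * ln (INR n) + x * (ln (INR (S n)) - ln (INR n))) by ring.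
  rewrite exp_plus. pose proof (falling_pos x n Hx). pose proof (pos_INR (S n)).
  assert (0 < INR (S n)) by (apply lt_0_INR; lia). field. lra.
Qed.

Lemma ln_le_sub1 y : 0 < y -> ln y <= y - 1.
Proof. intros Hy. pose proof (exp_ineq1_le (ln y)). rewrite exp_ln in H by auto. lra. Qed.

Lemma L_bounds n : (1 <= n)%nat ->
  1 / INR (S n) <= ln (INR (S n)) - ln (INR n) <= 1 / INR n.
Proof.
  intros Hn. assert (h0 : 0 < INR n) by (apply lt_0_INR; lia). assert (h1 : INR (S n) = INR n + 1) by apply S_INR.
  split.
  - pose proof (ln_le_sub1 (INR n / INR (S n)) ltac:(apply Rdiv_lt_0_compat; lra)).
    rewrite ln_div in H by lra. rewrite h1 in *.
    assert (INR n / (INR n + 1) - 1 = - (1 / (INR n + 1))) by (field; lra). lra.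
  - pose proof (ln_le_sub1 (INR (S n) / INR n) ltac:(apply Rdiv_lt_0_compat; lra)).
    rewrite ln_div in H by lra. rewrite h1 in *.
    assert ((INR n + 1) / INR n - 1 = 1 / INR n) by (field; lra). lra.
Qed.

Lemma ratio_ge1 x n : 0 < x -> (1 <= n)%nat ->
  1 <= (INR (S n) / (x + INR (S n))) * exp (x * (ln (INR (S n)) - ln (INR n))).
Proof.
  intros Hx Hn. destruct (L_bounds n Hn) as [L1 _]. assert (h0 : 0 < INR (S n)) by (apply lt_0_INR; lia).
  pose proof (exp_ineq1_le (x * (ln (INR (S n)) - ln (INR n)))).
  assert (x / INR (S n) <= x * (ln (INR (S n)) - ln (INR n))).
  { unfold Rdiv. replace (x * / INR (S n)) with (x * (1 / INR (S n))) by (field; lra). apply Rmult_le_compat_l; lra. }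
  assert (Hq : 0 < INR (S n) / (x + INR (S n))) by (apply Rdiv_lt_0_compat; lra).
  apply Rle_trans with ((INR (S n) / (x + INR (S n))) * (1 + x / INR (S n))).
  - right. field. lra.
  - apply Rmult_le_compat_l; lra.
Qed.

Lemma ratio_le x n : 0 < x -> (1 <= n)%nat ->
  (INR (S n) / (x + INR (S n))) * exp (x * (ln (INR (S n)) - ln (INR n)))
  <= exp (x * (1 + x) * (1 / INR n - 1 / INR (S n))).
Proof.
  intros Hx Hn. destruct (L_bounds n Hn) as [_ L2]. assert (h0 : 0 < INR n) by (apply lt_0_INR; lia).
  assert (h1 : INR (S n) = INR n + 1) by apply S_INR.
  pose proof (exp_ineq1_le (- x / (x + INR (S n)))).
  assert (E1 : INR (S n) / (x + INR (S n)) <= exp (- x / (x + INR (S n)))).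
  { eapply Rle_trans; [|exact H]. right. field. lra. }
  apply Rle_trans with (exp (- x / (x + INR (S n))) * exp (x * (1 / INR n))).
  - apply Rmult_le_compat; try (left; apply exp_pos); auto.
    + left; apply Rdiv_lt_0_compat; lra.
    + destruct (Rle_lt_or_eq_dec _ _ (Rmult_le_compat_l x _ _ (Rlt_le _ _ Hx) L2)) as [Hl|He].
      * left. apply exp_increasing. auto.
      * right. rewrite He. auto.
  - rewrite <- exp_plus.
    assert (- x / (x + INR (S n)) + x * (1 / INR n) <= x * (1 + x) * (1 / INR n - 1 / INR (S n))).
    { rewrite h1. apply Rle_trans with (x * (1 + x) / (INR n * (x + INR n + 1))); [right; field; lra|].
      replace (x * (1 + x) * (1 / INR n - 1 / (INR n + 1))) with (x * (1 + x) / (INR n * (INR n + 1))) by (field; lra).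
      unfold Rdiv. apply Rmult_le_compat_l; [nra|]. apply Rinv_le_contravar; nra. }
    destruct (Rle_lt_or_eq_dec _ _ H0) as [Hl|He].
    + left. apply exp_increasing. auto.
    + right. rewrite He. auto.
Qed.

Lemma gseq_pos x n : 0 < x -> (1 <= n)%nat -> 0 < gseq x n.
Proof.
  intros Hx Hn. unfold gseq. apply Rdiv_lt_0_compat; [|apply falling_pos; auto].
  apply Rmult_lt_0_compat; [apply INR_fact_pos| apply exp_pos].
Qed.

Lemma gseq_bound x n : 0 < x -> (1 <= n)%nat ->
  gseq x n * exp (x * (1 + x) * (1 / INR n)) <= gseq x 1 * exp (x * (1 + x)).
Proof.
  intros Hx Hn. induction n; [lia|]. destruct n.
  - change (INR 1) with 1. replace (x * (1 + x) * (1 / 1)) with (x * (1 + x)) by field. lra.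
  - eapply Rle_trans; [|apply IHn; lia].
    rewrite gseq_step by (auto; lia).
    set (K := x * (1 + x)).
    pose proof (ratio_le x (S n) Hx ltac:(lia)) as Hr. fold K in Hr.
    pose proof (gseq_pos x (S n) Hx ltac:(lia)).
    apply Rle_trans with (gseq x (S n) * exp (K * (1 / INR (S n) - 1 / INR (S (S n)))) * exp (K * (1 / INR (S (S n))))).
    + apply Rmult_le_compat_r; [left; apply exp_pos|]. rewrite Rmult_assoc. apply Rmult_le_compat_l; [lra|]. exact Hr.
    + right. rewrite Rmult_assoc, <- exp_plus. f_equal. f_equal. ring.
Qed.

Lemma gamma_exists x : 0 < x -> exists g, 0 < g /\ is_Gamma x g.
Proof.
  intros Hx. set (u := fun k => gseq x (S k)).
  assert (Hgr : Un_growing u).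
  { intros k. unfold u. rewrite (gseq_step x (S k)) by (auto; lia).
    pose proof (ratio_ge1 x (S k) Hx ltac:(lia)). pose proof (gseq_pos x (S k) Hx ltac:(lia)).
    rewrite Rmult_assoc. rewrite <- (Rmult_1_r (gseq x (S k))) at 1. apply Rmult_le_compat_l; lra. }
  assert (Hub : has_ub u).
  { exists (gseq x 1 * exp (x * (1 + x))). intros y [i ->]. unfold u.
    pose proof (gseq_bound x (S i) Hx ltac:(lia)). pose proof (gseq_pos x (S i) Hx ltac:(lia)).
    assert (1 <= exp (x * (1 + x) * (1 / INR (S i)))).
    { pose proof (exp_ineq1_le (x * (1 + x) * (1 / INR (S i)))). assert (0 < INR (S i)) by (apply lt_0_INR; lia).
      assert (0 <= x * (1 + x) * (1 / INR (S i))).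
      { apply Rmult_le_pos; [nra|]. left; apply Rdiv_lt_0_compat; lra. } lra. }
    nra. }
  destruct (growing_cv u Hgr Hub) as [g Hg].
  exists g. split.
  - pose proof (growing_ineq u g Hgr Hg 0). pose proof (gseq_pos x 1 Hx ltac:(lia)). unfold u in H. lra.
  - unfold is_Gamma. change (Un_cv (gseq x) g). apply is_lim_seq_Reals. apply is_lim_seq_incr_1.
    apply is_lim_seq_Reals. exact Hg.
Qed.

Lemma lim_frac c : 0 < c -> is_lim_seq (fun N => INR N / (INR N + c)) 1.
Proof.
  intros Hc.
  assert (Hl : is_lim_seq (fun N => / (INR N + c)) 0).
  { replace (Finite 0) with (Rbar_inv p_infty) by reflexivity.
    apply is_lim_seq_inv; [|discriminate].
    apply is_lim_seq_le_p_loc with INR; [|apply is_lim_seq_INR].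
    exists 0%nat. intros. lra. }
  pose proof (is_lim_seq_plus' _ _ 1 (-c * 0) (is_lim_seq_const 1)
     (is_lim_seq_mult' _ _ (-c) 0 (is_lim_seq_const (-c)) Hl)) as H2.
  replace (1 + -c * 0) with 1 in H2 by ring.
  eapply is_lim_seq_ext; [|exact H2]. intros N. simpl. pose proof (pos_INR N). field. lra.
Qed.

Lemma uk_lim a g : 0 < a -> 0 < g -> is_Gamma (a + 1) g ->
  is_lim_seq (fun n => gb a n / Rpower (INR n) a) (/ g).
Proof.
  intros Ha Hg HG.
  apply (is_lim_seq_incr_n _ 2).
  apply is_lim_seq_ext_loc with
    (fun N => (INR N / (INR N + 1)) * / gseq (a + 1) N * exp (a * ln (INR N / (INR N + 2)))).
  { exists 1%nat. intros N HN. assert (h0 : 0 < INR N) by (apply lt_0_INR; lia).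
    unfold gb, gseq, binomR. replace (N + 2 - 1)%nat with (S N) by lia.
    replace (INR (N + 2) + a - 1) with (a + 1 + INR N) by (rewrite plus_INR; simpl; ring).
    rewrite fact_simpl, mult_INR.
    pose proof (falling_pos (a + 1) N ltac:(lra)). pose proof (INR_fact_pos N).
    unfold Rpower. rewrite ln_div by lra.
    replace (INR (N + 2)) with (INR N + 2) by (rewrite plus_INR; simpl; ring).
    replace (a * (ln (INR N) - ln (INR N + 2))) with (a * ln (INR N) + - (a * ln (INR N + 2))) by ring.
    rewrite exp_plus, exp_Ropp.
    replace ((a + 1) * ln (INR N)) with (a * ln (INR N) + ln (INR N)) by ring.
    rewrite exp_plus, exp_ln by lra.
    rewrite S_INR. pose proof (exp_pos (a * ln (INR N))). pose proof (exp_pos (a * ln (INR N + 2))).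
    field. repeat split; lra. }
  replace (/ g) with (1 * / g * exp (a * ln 1)) by (rewrite ln_1, Rmult_0_r, exp_0; field; lra).
  apply is_lim_seq_mult'; [apply is_lim_seq_mult'|].
  - apply lim_frac. lra.
  - assert (H1 : is_lim_seq (gseq (a + 1)) g) by (apply is_lim_seq_Reals; exact HG).
    pose proof (is_lim_seq_inv _ (Finite g) H1 ltac:(intros H; injection H; lra)) as H2.
    simpl in H2. exact H2.
  - apply (is_lim_seq_continuous (fun y => exp (a * ln y))).
    + apply continuity_pt_filterlim. apply (ex_derive_continuous (fun y => exp (a * ln y))). auto_derive. lra.
    + apply lim_frac. lra.
Qed.

Lemma rpow_neg_lim c : 0 < c -> is_lim_seq (fun n => Rpower (INR n) (- c)) 0.
Proof.
  intros Hc.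
  assert (H1 : is_lim_seq (fun n => ln (INR n)) p_infty).
  { apply (is_lim_comp_seq ln INR p_infty p_infty is_lim_ln_p); [|apply is_lim_seq_INR].
    exists 0%nat. intros; discriminate. }
  assert (H2 : is_lim_seq (fun n => ln (INR n) * c) p_infty).
  { apply (is_lim_seq_mult _ _ p_infty c); [exact H1|apply is_lim_seq_const|].
    apply is_Rbar_mult_p_infty_pos. simpl. lra. }
  apply is_lim_seq_opp in H2. simpl in H2.
  assert (H3 : is_lim_seq (fun n => exp (- (ln (INR n) * c))) 0).
  { apply (is_lim_comp_seq (fun y => exp y) _ m_infty 0 is_lim_exp_m); [|exact H2].
    exists 0%nat. intros; discriminate. }
  eapply is_lim_seq_ext; [|exact H3]. intros n. unfold Rpower. f_equal. ring.
Qed.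

Lemma finsum_lim0 (F : nat -> nat -> R) N : (forall j, (j <= N)%nat -> is_lim_seq (F j) 0) ->
  is_lim_seq (fun n => sum_f_R0 (fun j => F j n) N) 0.
Proof.
  intros H. induction N.
  - simpl. apply H. lia.
  - simpl. replace (Finite 0) with (Finite (0 + 0)) by (f_equal; ring).
    apply is_lim_seq_plus'; [apply IHN; intros; apply H; lia| apply H; lia].
Qed.

Theorem part2 p (hp : 0 < p < 1) : forall r : nat, (1 <= r)%nat ->
     exists g : R, is_Gamma (INR r * p + 1) g /\
       Un_cv (fun n => expect p n (fun d => falling (INR d) r) /
                       (INR (fact r) * Rpower (INR n) (INR r * p) / g)) 1.
Proof.
  intros r Hr. destruct r as [|u]; [lia|].
  assert (Hrp : 0 < INR (S u) * p) by (apply Rmult_lt_0_compat; [apply lt_0_INR; lia|lra]).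
  destruct (gamma_exists (INR (S u) * p + 1) ltac:(lra)) as [g [Hg HG]].
  exists g. split; auto. apply is_lim_seq_Reals.
  set (term := fun j n => Binomial.C u j * (-1) ^ (u - j) *
                 (g * (gb (p * INR (S j)) n / Rpower (INR n) (INR (S u) * p)))).
  assert (Hsplit : forall j n, gb (p * INR (S j)) n / Rpower (INR n) (INR (S u) * p)
                   = (gb (p * INR (S j)) n / Rpower (INR n) (p * INR (S j))) * Rpower (INR n) (- (INR (S u) * p - p * INR (S j)))).
  { intros j n. unfold Rpower. pose proof (exp_pos (INR (S u) * p * ln (INR n))). pose proof (exp_pos (p * INR (S j) * ln (INR n))).
    replace (- (INR (S u) * p - p * INR (S j)) * ln (INR n)) with (p * INR (S j) * ln (INR n) + - (INR (S u) * p * ln (INR n))) by ring.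
    rewrite exp_plus, exp_Ropp. field. split; lra. }
  assert (HA : forall j, (j < u)%nat -> is_lim_seq (term j) 0).
  { intros j Hj. assert (Haj : 0 < p * INR (S j)) by (apply Rmult_lt_0_compat; [lra|apply lt_0_INR; lia]).
    destruct (gamma_exists (p * INR (S j) + 1) ltac:(lra)) as [gj [Hgj HGj]].
    pose proof (uk_lim _ _ Haj Hgj HGj) as Hu.
    assert (Hc : 0 < INR (S u) * p - p * INR (S j)).
    { assert (INR (S j) < INR (S u)) by (apply lt_INR; lia). nra. }
    pose proof (is_lim_seq_mult' _ _ _ _ Hu (rpow_neg_lim _ Hc)) as H1.
    pose proof (is_lim_seq_scal_l _ (Binomial.C u j * (-1) ^ (u - j) * g) _ H1) as H2.
    replace (Rbar_mult (Binomial.C u j * (-1) ^ (u - j) * g) (/ gj * 0)) with (Finite 0) in H2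
      by (simpl; f_equal; ring).
    eapply is_lim_seq_ext; [|exact H2]. intros n. unfold term. rewrite Hsplit. ring. }
  assert (HB : is_lim_seq (term u) 1).
  { assert (Hau : 0 < p * INR (S u)) by lra.
    rewrite Rmult_comm in HG.
    pose proof (uk_lim _ _ Hau Hg HG) as Hu.
    pose proof (is_lim_seq_scal_l _ g _ Hu) as H2. replace (Rbar_mult g (/ g)) with (Finite 1) in H2 by (simpl; f_equal; field; lra).
    eapply is_lim_seq_ext; [|exact H2]. intros n. unfold term.
    rewrite Nat.sub_diag, pow_O. unfold Binomial.C. rewrite Nat.sub_diag. change (fact 0) with 1%nat. change (INR 1) with 1.
    rewrite (Rmult_comm (INR (S u)) p). pose proof (INR_fact_pos u). pose proof (exp_pos (p * INR (S u) * ln (INR n))). unfold Rpower. field. split; lra. }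
  apply is_lim_seq_ext_loc with (fun n => sum_f_R0 (fun j => term j n) u).
  { exists 1%nat. intros n Hn. fold (Mom p n (S u)). rewrite Mom_closed by (lra || lia). unfold Aform.
    pose proof (INR_fact_pos (S u)). assert (0 < Rpower (INR n) (INR (S u) * p)) by apply exp_pos.
    symmetry. transitivity ((g / Rpower (INR n) (INR (S u) * p)) *
      sum_f_R0 (fun j => Binomial.C u j * (-1) ^ (u - j) * gb (p * INR (S j)) n) u).
    - field. repeat split; lra.
    - rewrite scal_sum. apply sum_eq. intros j _. unfold term. field. lra. }
  destruct u as [|u].
  - simpl. exact HB.
  - replace (Finite 1) with (Finite (0 + 1)) by (f_equal; ring).
    eapply is_lim_seq_ext; [intros n; symmetry; apply tech5|].
    apply is_lim_seq_plus'; [|exact HB]. apply finsum_lim0. intros j Hj. apply HA. lia.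
Qed.

End Analysis.

Theorem mainTheorem2 (p : R) (hp : 0 < p < 1) :
  (* exact factorial moments *)
  (forall r n : nat, (1 <= r)%nat -> (1 <= n)%nat ->
     expect p n (fun d => falling (INR d) r) =
     INR (fact r) *
       sum_f_R0 (fun j => C (r - 1) j * (-1) ^ (r - 1 - j) *
                          binomR (INR n + p * INR (S j) - 1) (n - 1)) (r - 1))
  /\
  (* asymptotics: E(D_n^{\underline r}) ~ r! n^{rp} / Gamma(rp+1) *)
  (forall r : nat, (1 <= r)%nat ->
     exists g : R, is_Gamma (INR r * p + 1) g /\
       Un_cv (fun n => expect p n (fun d => falling (INR d) r) /
                       (INR (fact r) * Rpower (INR n) (INR r * p) / g)) 1)
  /\
  (* bivariate probability generating function *)
  (forall z v : R, 0 <= z < 1 -> 0 <= v <= 1 ->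
     infinite_sum
       (fun k => sum_f_R0 (fun m => prob_deg p (S k) m * v ^ m) (S k) * z ^ k)
       (v / (v * (1 - z) + (1 - v) * Rpower (1 - z) (1 - p)))).
Proof.
  split; [|split].
  - exact (part1 p hp).
  - exact (Analysis.part2 p hp).
  - exact (Analysis.part3 p hp).
Qed.
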